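(* Let $\Sigma_{-1,-1}\in\mathbb{R}^{(p-1)\times(p-1)}$ be a covariance matrix with all diagonal entries $1$ and $\Lambda^2_{\min}(\Sigma_{-1,-1})\gg0$. Fix $S\subset\{2,\dots,p\}$ with cardinality ${\rm s}$ and $\lambda^\sharp>0$. Suppose there exists $z\in\mathbb{R}^{p-1}$ with $\|z\|_\infty\le1$, $$1-\lambda^{\sharp2}\|\Sigma_{-1,-1}^{-1/2}z\|_2^2\gg0,\qquad \lambda^{\sharp2}\|\Sigma_{-1,-1}^{-1/2}z\|_2^2\gg0 .$$ Let $\gamma^\sharp\in\mathbb{R}^{p-1}$ satisfy $\gamma^\sharp_j=0$ for $j\notin S$ and $$1-\lambda^{\sharp2}\|\Sigma_{-1,-1}^{-1/2}z\|_2^2-\|\Sigma_{-1,-1}^{1/2}\gamma^\sharp\|_2^2\gg0 .$$ Define $\gamma^0:=\gamma^\sharp+\lambda^\sharp\Sigma_{-1,-1}^{-1}z$. Then, if $\lambda^\sharp\sqrt{\rm s}\to0$: the pair $(\gamma^\sharp,\lambda^\sharp)$ is eligible (with respect to this $\gamma^0$), $\gamma^0$ is eventually allowed, $\lambda^\sharp\|\gamma^0\|_1\not\to0$, and in fact $\|\Sigma_{-1,-1}^{1/2}(\gamma^0-\gamma^\sharp)\|_2^2\gg0$.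
   Context: Asymptotic framework: all quantities may depend on $n$; limits as $n\to\infty$. ''$a\gg0$'' means $a$ is strictly positive and bounded away from zero (eventually). $\Lambda^2_{\min}(A)$ is the smallest eigenvalue of $A$. A pair $(\gamma^\sharp,\lambda^\sharp)$ is eligible (relative to $\gamma^0$ and $\Sigma_{-1,-1}$) if $\|\Sigma_{-1,-1}(\gamma^\sharp-\gamma^0)\|_\infty\le\lambda^\sharp$ and $\lambda^\sharp\|\gamma^\sharp\|_1\to0$. A vector $\gamma^0$ is allowed if the matrix $\Sigma(\gamma^0):=\begin{pmatrix}1&\gamma^{0T}\Sigma_{-1,-1}\\ \Sigma_{-1,-1}\gamma^0&\Sigma_{-1,-1}\end{pmatrix}$ is positive definite with $\Lambda^2_{\min}(\Sigma(\gamma^0))\gg0$ and $\|\Sigma_{-1,-1}\gamma^0\|_\infty\le1$. *)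

(* Defs.v *)
From HB Require Import structures.
From mathcomp Require Import all_boot all_order all_algebra.
From mathcomp Require Import all_classical all_reals all_analysis.
Set Implicit Arguments. Unset Strict Implicit. Unset Printing Implicit Defensive.
Import Order.TTheory GRing.Theory Num.Theory.
Local Open Scope ring_scope.
Local Open Scope classical_set_scope.

Section Defs.
Variable R : realType.

Definition normoo d (v : 'cV[R]_d) : R := \big[Num.max/0]_(i < d) `|v i 0|.
Definition norm1 d (v : 'cV[R]_d) : R := \sum_(i < d) `|v i 0|.
(* quadratic form v^T A v ; note ||A^{1/2} v||_2^2 = qform A v and
   ||A^{-1/2} v||_2^2 = qform (invmx A) v for symmetric positive definite A *)
Definition qform d (A : 'M[R]_d) (v : 'cV[R]_d) : R := (v^T *m A *m v) 0 0.

Definition posdef d (A : 'M[R]_d) := forall v : 'cV[R]_d, v != 0 -> 0 < qform A v.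

(* a >> 0 : eventually bounded away from zero (and positive) *)
Definition away0 (a : nat -> R) :=
  exists2 c : R, 0 < c & \forall n \near \oo, c <= a n.

(* Lambda^2_min(A_n) >> 0 : eventually every (real) eigenvalue is >= c > 0 *)
Definition mineig_away0 (k : nat -> nat) (A : forall n, 'M[R]_(k n)) :=
  exists2 c : R, 0 < c & \forall n \near \oo, forall a, eigenvalue (A n) a -> c <= a.

Definition SigmaG d (Sig : 'M[R]_d) (g : 'cV[R]_d) : 'M[R]_(1 + d) :=
  block_mx (1%:M : 'M[R]_1) (g^T *m Sig) (Sig *m g) Sig.

Definition eligible (d : nat -> nat) (Sig : forall n, 'M[R]_(d n))
  (gs g0 : forall n, 'cV[R]_(d n)) (lam : nat -> R) :=
  (\forall n \near \oo, normoo (Sig n *m (gs n - g0 n)) <= lam n) /\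
  (lam n * norm1 (gs n) @[n --> \oo] --> 0).

Definition allowed (d : nat -> nat) (Sig : forall n, 'M[R]_(d n))
  (g0 : forall n, 'cV[R]_(d n)) :=
  (\forall n \near \oo, posdef (SigmaG (Sig n) (g0 n)) /\ normoo (Sig n *m g0 n) <= 1) /\
  mineig_away0 (fun n => SigmaG (Sig n) (g0 n)).

End Defs.

(* Main.v *)
Require Import Defs.
From HB Require Import structures.
From mathcomp Require Import all_boot all_order all_algebra.
From mathcomp Require Import all_classical all_reals all_analysis.
From mathcomp Require Import ring lra.
Import Order.TTheory GRing.Theory Num.Theory.
Import numFieldTopology.Exports numFieldNormedType.Exports.
Local Open Scope ring_scope.
Local Open Scope classical_set_scope.

Set Implicit Arguments. Unset Strict Implicit.

Section Helpers.
Variable R : realType.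

Definition bil d (A : 'M[R]_d) (u v : 'cV[R]_d) : R := (u^T *m A *m v) 0 0.
Definition sq d (v : 'cV[R]_d) : R := (v^T *m v) 0 0.

Lemma bilE d (A : 'M[R]_d) u v : bil A u v = \sum_i \sum_j u i 0 * A i j * v j 0.
Proof.
rewrite /bil mxE; under eq_bigr => j _ do rewrite mxE mulr_suml.
rewrite exchange_big; apply: eq_bigr => i _; apply: eq_bigr => j _; by rewrite !mxE.
Qed.

Lemma sqE d (v : 'cV[R]_d) : sq v = \sum_i v i 0 ^+ 2.
Proof. by rewrite /sq mxE; apply: eq_bigr => i _; rewrite !mxE expr2. Qed.

Lemma sq_ge0 d (v : 'cV[R]_d) : 0 <= sq v.
Proof. by rewrite sqE; apply: sumr_ge0 => i _; rewrite sqr_ge0. Qed.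

Lemma sq_eq0 d (v : 'cV[R]_d) : sq v = 0 -> v = 0.
Proof.
rewrite sqE => /eqP; rewrite psumr_eq0 => [/allP H|i _]; last by rewrite sqr_ge0.
apply/matrixP => i j; rewrite (ord1 j) mxE.
by have := H i (mem_index_enum _); rewrite /= sqrf_eq0 => /eqP.
Qed.

Lemma qformE d (A : 'M[R]_d) v : qform A v = bil A v v. Proof. by []. Qed.

Lemma bilDl d (A : 'M[R]_d) u1 u2 v : bil A (u1 + u2) v = bil A u1 v + bil A u2 v.
Proof. by rewrite /bil linearD /= !mulmxDl mxE. Qed.
Lemma bilDr d (A : 'M[R]_d) u v1 v2 : bil A u (v1 + v2) = bil A u v1 + bil A u v2.
Proof. by rewrite /bil mulmxDr mxE. Qed.
Lemma bilZl d (A : 'M[R]_d) k u v : bil A (k *: u) v = k * bil A u v.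
Proof. by rewrite /bil linearZ /= -!scalemxAl mxE. Qed.
Lemma bilZr d (A : 'M[R]_d) k u v : bil A u (k *: v) = k * bil A u v.
Proof. by rewrite /bil -scalemxAr mxE. Qed.
Lemma bilNr d (A : 'M[R]_d) u v : bil A u (- v) = - bil A u v.
Proof. by rewrite -scaleN1r bilZr mulN1r. Qed.
Lemma bilNl d (A : 'M[R]_d) u v : bil A (- u) v = - bil A u v.
Proof. by rewrite -scaleN1r bilZl mulN1r. Qed.
Lemma bil_sym d (A : 'M[R]_d) u v : A^T = A -> bil A u v = bil A v u.
Proof.
move=> HA; rewrite /bil -[in LHS](trmxK (u^T *m A *m v)) [in LHS]mxE.
by rewrite !trmx_mul trmxK HA mulmxA.
Qed.

Lemma qformD d (A : 'M[R]_d) u v : A^T = A ->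
  qform A (u + v) = qform A u + qform A v + 2 * bil A u v.
Proof.
move=> HA; rewrite !qformE bilDl !bilDr (bil_sym v u HA).
by rewrite mulr2n mulrDl mul1r; ring.
Qed.
Lemma qformZ d (A : 'M[R]_d) k v : qform A (k *: v) = k ^+ 2 * qform A v.
Proof. by rewrite !qformE bilZl bilZr mulrA expr2. Qed.
Lemma qformN d (A : 'M[R]_d) v : qform A (- v) = qform A v.
Proof. by rewrite !qformE bilNl bilNr opprK. Qed.

Lemma sq_qform d (v : 'cV[R]_d) : sq v = qform 1%:M v.
Proof. by rewrite /sq /qform mulmx1. Qed.

Lemma bil_CS d (A : 'M[R]_d) u v : A^T = A -> (forall w, 0 <= qform A w) ->
  bil A u v ^+ 2 <= qform A u * qform A v.
Proof.
move=> HA Hp.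
have key t : 0 <= qform A u + t ^+ 2 * qform A v + 2 * t * bil A u v.
  by have := Hp (u + t *: v); rewrite qformD // qformZ bilZr mulrA.
set p := qform A u in key *; set r := qform A v in key *; set b := bil A u v in key *.
have p0 : 0 <= p by apply: Hp.
have r0 : 0 <= r by apply: Hp.
have [rz|rpos] := eqVneq r 0.
  rewrite rz mulr0; case: (eqVneq b 0) => [->|bn0]; first by rewrite expr0n.
  have := key (- (p + 1) / (2 * b)); rewrite rz mulr0 addr0.
  have -> : 2 * (- (p + 1) / (2 * b)) * b = - (p + 1) by field.
  lra.
have rp : 0 < r by rewrite lt_def rpos r0.
have := key (- b / r).
have -> : p + (- b / r) ^+ 2 * r + 2 * (- b / r) * b = p - b ^+ 2 / r.
  by field.
move=> H; have := mulr_ge0 H (ltW rp); rewrite mulrBl mulfVK //; lra.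
Qed.

End Helpers.

Section H2.
Variable R : realType.

Lemma sum_continuous (T : topologicalType) (I : Type) (r : seq I) (F : I -> T -> R) :
  (forall i, continuous (F i)) -> continuous (fun x => \sum_(i <- r) F i x).
Proof.
move=> HF; elim: r => [|a r IH].
  under [fun x => _]eq_fun => x do rewrite big_nil.
  exact: cst_continuous.
under [fun x => _]eq_fun => x do rewrite big_cons.
move=> x; apply: (@continuousD _ _ _ (F a) (fun x => \sum_(i <- r) F i x) x).
  exact: HF.
exact: IH.
Qed.

Lemma qform0 d (A : 'M[R]_d) : qform A 0 = 0.
Proof. by rewrite /qform mulmx0 mxE. Qed.

Lemma qform_shift d (A : 'M[R]_d) m v : qform (A - m%:M) v = qform A v - m * sq v.
Proof.
by rewrite /qform /sq mulmxBr mulmxBl mul_mx_scalar -scalemxAl !mxE.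
Qed.

Lemma bil_delta d (B : 'M[R]_d) i w : bil B (delta_mx i 0) w = (B *m w) i 0.
Proof. by rewrite /bil trmx_delta -mulmxA -rowE mxE. Qed.

Lemma eig_lb d (A : 'M[R]_d) c : A^T = A -> (forall a, eigenvalue A a -> c <= a) ->
  forall v, c * sq v <= qform A v.
Proof.
case: d A => [|n] A HA Heig v.
  by rewrite qformE sqE bilE !big_ord0 mulr0.
pose f (u : 'rV[R]_n.+1) := qform A u^T.
pose g (u : 'rV[R]_n.+1) := sq u^T.
have fE u : f u = \sum_i \sum_j (u 0 i * A i j * u 0 j).
  by rewrite /f qformE bilE; apply: eq_bigr => i _; apply: eq_bigr => j _; rewrite !mxE.
have gE u : g u = \sum_i (u 0 i * u 0 i).
  by rewrite /g sqE; apply: eq_bigr => i _; rewrite !mxE expr2.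
have fc : continuous f.
  have -> : f = (fun u => \sum_i \sum_j (u 0 i * A i j * u 0 j)) by apply: funext => u; rewrite fE.
  apply: sum_continuous => i; apply: sum_continuous => j x.
  apply: (@continuousM _ _ (fun u : 'rV[R]_n.+1 => u 0 i * A i j) (fun u => u 0 j)).
    apply: (@continuousM _ _ (fun u : 'rV[R]_n.+1 => u 0 i) (fun u => A i j)).
      exact: coord_continuous.
    exact: cst_continuous.
  exact: coord_continuous.
have gc : continuous g.
  have -> : g = (fun u => \sum_i (u 0 i * u 0 i)) by apply: funext => u; rewrite gE.
  apply: sum_continuous => i x.
  apply: (@continuousM _ _ (fun u : 'rV[R]_n.+1 => u 0 i) (fun u => u 0 i));
  exact: coord_continuous.
pose Sph := g @^-1` [set 1].
have Sph_closed : closed Sph.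
  apply: preimage_closed; first by move=> x _; exact: gc.
  exact: closed_eq.
have Sph_bounded : bounded_set Sph.
  rewrite /bounded_set /=; exists 1; split; first exact: num_real.
  move=> M M1 u Su /=; rewrite /Num.norm /= mx_normrE.
  apply: bigmax_le; first lra.
  move=> [i j] _ /=; rewrite (ord1 i).
  have : u 0 j * u 0 j <= 1.
    move: Su; rewrite /Sph /= gE (bigD1 j) //= => <-.
    by rewrite lerDl; apply: sumr_ge0 => k _; rewrite -expr2 sqr_ge0.
  move=> H; suff : `|u 0 j| <= 1 by lra.
  by rewrite ler_norml; apply/andP; split; nra.
have Sph_cpt : compact Sph by apply: bounded_closed_compact.
have Sph0 : Sph !=set0.
  exists (delta_mx 0 ord0); rewrite /Sph /= gE (bigD1 ord0) //= big1.
    by rewrite !mxE /= mulr1 addr0.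
  by move=> i ni; rewrite !mxE (negbTE ni) andbF mulr0.
have [w wS wmin] := compact_EVT_min Sph0 Sph_cpt (continuous_subspaceT fc).
move/set_mem: wS; rewrite /Sph /= => gw1.
set m := f w.
have claim1 u : m * sq u <= qform A u.
  have [u0|un0] := eqVneq (sq u) 0.
    by rewrite u0 mulr0 (sq_eq0 u0) qform0.
  have s0 : 0 < sq u by rewrite lt_def un0 sq_ge0.
  set r := Num.sqrt (sq u).
  have r0 : 0 < r by rewrite sqrtr_gt0.
  have r2 : r ^+ 2 = sq u by rewrite sqr_sqrtr // sq_ge0.
  have Su : Sph (r^-1 *: u)^T.
    rewrite /Sph /g /= trmxK sq_qform qformZ -sq_qform exprVn r2 mulVf //.
  have := wmin _ (mem_set Su).
  rewrite /f trmxK qformZ exprVn r2 -/m => H.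
  by rewrite -ler_pdivlMr // [_ / _]mulrC.
pose B := A - m%:M.
have HB : B^T = B by rewrite /B linearB /= tr_scalar_mx HA.
have Bpsd w' : 0 <= qform B w' by rewrite qform_shift subr_ge0 claim1.
have Bw : qform B w^T = 0 by rewrite qform_shift -/(g w) gw1 mulr1 /m /f subrr.
have Bw0 : B *m w^T = 0.
  apply/matrixP => i j; rewrite (ord1 j) [RHS]mxE -bil_delta.
  have := bil_CS (delta_mx i 0) (w^T) HB Bpsd; rewrite Bw mulr0.
  by move=> H; apply/eqP; rewrite -sqrf_eq0 eq_le H sqr_ge0.
have wA : w *m A = m *: w.
  have -> : A = B + m%:M by rewrite /B subrK.
  rewrite mulmxDr mul_mx_scalar.
  have -> : w *m B = 0 by rewrite -[w]trmxK -HB -trmx_mul Bw0 trmx0.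
  by rewrite add0r.
have wn0 : w != 0.
  by apply/eqP => w0; move: gw1; rewrite /g w0 trmx0 sq_qform qform0; lra.
have cm : c <= m by apply: Heig; apply/eigenvalueP; exists w.
by apply: le_trans (claim1 v); apply: ler_wpM2r => //; apply: sq_ge0.
Qed.

End H2.

Lemma nearE (P : nat -> Prop) : (\forall n \near \oo, P n) <-> exists N, forall n, (N <= n)%N -> P n.
Proof. split => [[N _ H]|[N H]]; [exists N => n /H|exists N => // n /H]; by []. Qed.

Section H3.
Variable R : realType.

Definition dot d (u v : 'cV[R]_d) : R := (u^T *m v) 0 0.
Lemma dotE d (u v : 'cV[R]_d) : dot u v = \sum_i u i 0 * v i 0.
Proof. by rewrite /dot mxE; apply: eq_bigr => i _; rewrite mxE. Qed.

Lemma normoo_le d (v : 'cV[R]_d) b : 0 <= b -> (forall i, `|v i 0| <= b) -> normoo v <= b.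
Proof. by move=> b0 H; rewrite /normoo; apply: bigmax_le => // i _; apply: H. Qed.

Lemma normoo_ge d (v : 'cV[R]_d) i : `|v i 0| <= normoo v.
Proof. by rewrite /normoo; apply: (le_bigmax 0 (fun i => `|v i 0|) i). Qed.

Lemma norm1_ge0 d (v : 'cV[R]_d) : 0 <= norm1 v.
Proof. by apply: sumr_ge0 => i _. Qed.

Lemma norm1D d (u v : 'cV[R]_d) : norm1 (u + v) <= norm1 u + norm1 v.
Proof.
rewrite /norm1 -big_split /=; apply: ler_sum => i _; rewrite mxE; exact: ler_normD.
Qed.

Lemma norm1Z d k (v : 'cV[R]_d) : norm1 (k *: v) = `|k| * norm1 v.
Proof. by rewrite /norm1 mulr_sumr; apply: eq_bigr => i _; rewrite mxE normrM. Qed.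

Lemma norm1N d (v : 'cV[R]_d) : norm1 (- v) = norm1 v.
Proof. by rewrite -scaleN1r norm1Z normrN normr1 mul1r. Qed.

Lemma dot_le d (u v : 'cV[R]_d) : normoo v <= 1 -> `|dot u v| <= norm1 u.
Proof.
move=> Hv; rewrite dotE /norm1; apply: le_trans (ler_norm_sum _ _ _) _.
apply: ler_sum => i _; rewrite normrM.
have := le_trans (normoo_ge v i) Hv => H.
by rewrite -[X in _ <= X]mulr1; apply: ler_wpM2l.
Qed.

Lemma dotC d (u v : 'cV[R]_d) : dot u v = dot v u.
Proof. by rewrite !dotE; apply: eq_bigr => i _; rewrite mulrC. Qed.

Lemma norm1_supp d (v : 'cV[R]_d) (S : {set 'I_d}) :
  (forall j, j \notin S -> v j 0 = 0) -> norm1 v ^+ 2 <= #|S|%:R * sq v.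
Proof.
move=> Hs.
have -> : norm1 v = \sum_(i in S) `|v i 0|.
  rewrite /norm1 [RHS]big_mkcond /=; apply: eq_bigr => i _.
  by case: ifP => // /negbT /Hs ->; rewrite normr0.
have Hq : \sum_(i in S) `|v i 0| ^+ 2 <= sq v.
  have nK (x : R) : `|x| ^+ 2 = x ^+ 2 by rewrite -normrX ger0_norm // sqr_ge0.
  under eq_bigr do rewrite nK.
  rewrite sqE [X in _ <= X](bigID (fun i => i \in S)) /= lerDl.
  by apply: sumr_ge0 => i _; rewrite sqr_ge0.
set Q := \sum_(i in S) `|v i 0| ^+ 2 in Hq *.
have H2 : 2 * (\sum_(i in S) `|v i 0|) ^+ 2 <= 2 * (#|S|%:R * Q).
  rewrite expr2 mulr_suml mulr_sumr.
  have -> : 2 * (#|S|%:R * Q) = \sum_(i in S) \sum_(j in S) (`|v i 0| ^+ 2 + `|v j 0| ^+ 2).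
    under eq_bigr do rewrite big_split /= sumr_const.
    rewrite big_split /= sumr_const /Q ?sumrMnl.
    by rewrite mulr_natl mulr_natl mulr2n.
  apply: ler_sum => i _; rewrite !mulr_sumr.
  apply: ler_sum => j _.
  set a := `|v i 0|; set b := `|v j 0|.
  have : 0 <= (a - b) ^+ 2 by apply: sqr_ge0.
  rewrite mulrA; lra.
have nS : 0 <= #|S|%:R :> R by [].
have : (\sum_(i in S) `|v i 0|) ^+ 2 <= #|S|%:R * Q by lra.
move=> H; apply: le_trans H _; apply: ler_wpM2l => //.
Qed.

End H3.

Section H4.
Variable R : realType.

Lemma qform_SigmaG d (Sg : 'M[R]_d) g (v : 'cV[R]_(1 + d)) : Sg^T = Sg ->
  qform (SigmaG Sg g) v = (usubmx v 0 0) ^+ 2 + 2 * (usubmx v 0 0) * bil Sg g (dsubmx v)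
     + qform Sg (dsubmx v).
Proof.
move=> HS; move: (usubmx v) (dsubmx v) (vsubmxK v) => x y <-.
rewrite /qform /SigmaG tr_col_mx mul_row_block mul_row_col.
rewrite [x]mx11_scalar tr_scalar_mx mulmx1 !mulmxDl !mul_mx_scalar mul_scalar_mx.
rewrite -!scalemxAl [y^T *m (Sg *m g)]mulmxA.
have e1 : (y^T *m Sg *m g) 0 0 = bil Sg g y by rewrite (bil_sym _ _ HS).
rewrite /bil in e1 *; rewrite -e1.
set t1 := (y^T *m Sg *m g); set t3 := y^T *m Sg *m y.
have e2 : \sum_j (g^T *m Sg) 0 j * y j 0 = \sum_j (y^T *m Sg) 0 j * g j 0.
  by have := bil_sym g y HS; rewrite /bil !mxE.
rewrite !mxE eqxx mulr1n e2; ring.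
Qed.

Lemma sq_col d (v : 'cV[R]_(1 + d)) : sq v = (usubmx v 0 0) ^+ 2 + sq (dsubmx v).
Proof.
move: (usubmx v) (dsubmx v) (vsubmxK v) => x y <-.
rewrite /sq tr_col_mx mul_row_col [x]mx11_scalar tr_scalar_mx.
by rewrite mul_mx_scalar !mxE /= expr2.
Qed.

End H4.

Unset Implicit Arguments. Set Strict Implicit.

Theorem lemma3p7 (R : realType) (d : nat -> nat)
  (Sig : forall n, 'M[R]_(d n))
  (S : forall n, {set 'I_(d n)})
  (lam : nat -> R)
  (z gs : forall n, 'cV[R]_(d n))
  (Hsym : forall n, (Sig n)^T = Sig n)
  (Hpsd : forall n (v : 'cV[R]_(d n)), 0 <= qform (Sig n) v)
  (Hdiag : forall n i, Sig n i i = 1)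
  (Heig : mineig_away0 Sig)
  (Hlam : forall n, 0 < lam n)
  (Hz : forall n, normoo (z n) <= 1)
  (Hz1 : away0 (fun n => 1 - lam n ^+ 2 * qform (invmx (Sig n)) (z n)))
  (Hz2 : away0 (fun n => lam n ^+ 2 * qform (invmx (Sig n)) (z n)))
  (Hsupp : forall n (j : 'I_(d n)), j \notin S n -> gs n j 0 = 0)
  (Hgs : away0 (fun n => 1 - lam n ^+ 2 * qform (invmx (Sig n)) (z n)
                          - qform (Sig n) (gs n)))
  (Hrate : lam n * Num.sqrt (#|S n|%:R) @[n --> \oo] --> 0) :
  let g0 := fun n => gs n + lam n *: (invmx (Sig n) *m z n) in
  eligible Sig gs g0 lam /\
  allowed Sig g0 /\
  ~ (lam n * norm1 (g0 n) @[n --> \oo] --> 0) /\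
  away0 (fun n => qform (Sig n) (g0 n - gs n)).
Proof.
move=> g0.
case: Heig => cE cE0 /nearE [N0 HN0].
case: Hz2 => c2 c20 /nearE [N2 HN2].
case: Hgs => c3 c30 /nearE [N3 HN3].
have LB n : (N0 <= n)%N -> forall v, cE * sq v <= qform (Sig n) v.
  by move=> Hn v; apply: (@eig_lb R _ (Sig n) cE (Hsym n) (HN0 n Hn)).
have Unit n : (N0 <= n)%N -> Sig n \in unitmx.
  move=> Hn; apply/negPn/negP => Hnu.
  have : eigenvalue (Sig n) 0.
    rewrite /eigenvalue /eigenspace.
    have -> : (0 : R)%:M = 0 :> 'M[R]_(d n).
      by apply/matrixP => i j; rewrite !mxE mul0rn.
    by rewrite subr0 kermx_eq0 row_free_unit.
  by move/(HN0 n Hn); lra.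
pose w n := invmx (Sig n) *m z n.
pose a n := lam n ^+ 2 * qform (invmx (Sig n)) (z n).
have Sw n : (N0 <= n)%N -> Sig n *m w n = z n.
  by move=> Hn; rewrite /w mulKVmx // Unit.
have qw n : (N0 <= n)%N -> qform (Sig n) (w n) = qform (invmx (Sig n)) (z n).
  move=> Hn; rewrite /qform -mulmxA Sw // /w trmx_mul trmx_inv Hsym.
  by [].
have adot n : qform (invmx (Sig n)) (z n) = dot (z n) (w n).
  by rewrite /qform /dot /w mulmxA.
have bilw n : (N0 <= n)%N -> bil (Sig n) (gs n) (w n) = dot (gs n) (z n).
  by move=> Hn; rewrite /bil /dot -mulmxA Sw.
have g0E n : g0 n = gs n + lam n *: w n by [].
have diffE n : gs n - g0 n = - (lam n *: w n).
  by rewrite g0E opprD addrA subrr add0r.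
have diffE' n : g0 n - gs n = lam n *: w n.
  by rewrite g0E addrAC subrr add0r.
have age n : (N2 <= n)%N -> c2 <= a n by move=> Hn; exact: (HN2 n Hn).
have qgs n : (N2 <= n)%N -> (N3 <= n)%N -> qform (Sig n) (gs n) <= 1 - a n - c3.
  by move=> H2 H3; have := HN3 n H3; rewrite /= -/(a n); lra.
set K := Num.sqrt (cE^-1).
have K0 : 0 <= K by apply: sqrtr_ge0.
have n1gs n : (N0 <= n)%N -> (N2 <= n)%N -> (N3 <= n)%N ->
    norm1 (gs n) <= Num.sqrt (#|S n|%:R) * K.
  move=> H0 H2 H3.
  have H1 := norm1_supp (Hsupp n).
  have Hs : sq (gs n) <= cE^-1.
    have := LB n H0 (gs n); have := qgs n H2 H3; have := age n H2 => h1 h2 h3.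
    rewrite -(ler_pM2l cE0) mulfV ?gt_eqF //; lra.
  rewrite -[norm1 _](ger0_norm (norm1_ge0 _)) -sqrtr_sqr -sqrtrM ?ler0n //.
  apply: ler_wsqrtr; apply: le_trans H1 _; apply: ler_wpM2l => //; exact: ler0n.
have Heli : lam n * norm1 (gs n) @[n --> \oo] --> 0.
  apply/cvgrPdist_lt => eps eps0.
  have K1 : 0 < K + 1 by lra.
  have /cvgrPdist_lt Hr := Hrate.
  have := Hr (eps / (K + 1)) (divr_gt0 eps0 K1).
  move=> /nearE [N4 HN4]; apply: (proj2 (nearE _)).
  exists (maxn N0 (maxn N2 (maxn N3 N4))) => n.
  rewrite !geq_max => /andP[h0 /andP[h2 /andP[h3 h4]]].
  have := HN4 n h4; rewrite !sub0r !normrN.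
  have l0 := Hlam n.
  have t0 : 0 <= lam n * Num.sqrt (#|S n|%:R) by rewrite mulr_ge0 ?sqrtr_ge0 // ltW.
  rewrite (ger0_norm t0) (ger0_norm (mulr_ge0 (ltW l0) (norm1_ge0 _))).
  rewrite ltr_pdivlMr // => Ht.
  have := ler_wpM2l (ltW l0) (n1gs n h0 h2 h3).
  have : lam n * Num.sqrt (#|S n|%:R) * K <= lam n * Num.sqrt (#|S n|%:R) * (K + 1).
    by apply: ler_wpM2l => //; lra.
  rewrite mulrA; lra.
have Hsmall eps : 0 < eps -> exists N, forall n, (N <= n)%N -> lam n * norm1 (gs n) < eps.
  move=> e0; have /cvgrPdist_lt He := Heli.
  have := He eps e0 => /nearE [N HN].
  exists N => n /HN; rewrite sub0r normrN ger0_norm //.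
  by rewrite mulr_ge0 ?norm1_ge0 // ltW.
have [N5 HN5] := Hsmall (c3 / 4) (divr_gt0 c30 (ltr0Sn _ _)).
set Nall := maxn N0 (maxn N2 (maxn N3 N5)).
have NallP n : (Nall <= n)%N -> [/\ (N0 <= n)%N, (N2 <= n)%N, (N3 <= n)%N & (N5 <= n)%N].
  by rewrite !geq_max => /andP[h0 /andP[h2 /andP[h3 h5]]].
have qg0 n : (Nall <= n)%N -> c3 / 2 <= 1 - qform (Sig n) (g0 n).
  move=> /NallP [h0 h2 h3 h5].
  rewrite g0E qformD // qformZ bilZr bilw // qw //.
  have hd := dot_le (gs n) (Hz n).
  have hd' : dot (gs n) (z n) <= norm1 (gs n) by move: hd; rewrite ler_norml => /andP[].
  have := ler_wpM2l (ltW (Hlam n)) hd'.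
  have := HN5 n h5; have := qgs n h2 h3; rewrite /a.
  lra.
pose kap := Num.min (cE / 2) (c3 / (2 * (1 + 2 / cE))).
have cE' : 0 < 1 + 2 / cE by have := divr_gt0 (ltr0Sn R 1) cE0; lra.
have kap0 : 0 < kap by rewrite lt_min !divr_gt0 // mulr_gt0.
have k1 : kap * 2 <= cE.
  have : kap <= cE / 2 by rewrite ge_min lexx.
  lra.
have k2 : kap * (1 + 2 / cE) <= c3 / 2.
  have : kap <= c3 / (2 * (1 + 2 / cE)) by rewrite ge_min lexx orbT.
  rewrite invfM mulrA -ler_pdivlMr //; lra.
have LBM n : (Nall <= n)%N -> forall v, kap * sq v <= qform (SigmaG (Sig n) (g0 n)) v.
  move=> Hn v; have [h0 h2 h3 h5] := NallP n Hn.
  rewrite qform_SigmaG // sq_col.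
  set xi := usubmx v 0 0; set y := dsubmx v.
  set u := y + xi *: g0 n.
  have Hqu : qform (Sig n) u = qform (Sig n) y + xi ^+ 2 * qform (Sig n) (g0 n)
                               + 2 * xi * bil (Sig n) (g0 n) y.
    by rewrite /u qformD // qformZ bilZr (bil_sym _ _ (Hsym n)) mulrA.
  have yE : y = u - xi *: g0 n by rewrite /u addrK.
  have sq_y : sq y <= 2 * sq u + 2 * (xi ^+ 2 * sq (g0 n)).
    have e1 := qformD (A:=1%:M) u (- (xi *: g0 n)) (trmx1 _ _).
    have e2 := qformD (A:=1%:M) u (xi *: g0 n) (trmx1 _ _).
    rewrite qformN bilNr -yE in e1.
    have : 0 <= qform 1%:M (u + xi *: g0 n) by rewrite -sq_qform sq_ge0.
    rewrite !sq_qform qformZ in e1 e2 *; lra.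
  have hq := qg0 n Hn.
  have sqg0 : sq (g0 n) <= cE^-1.
    have := LB n h0 (g0 n) => h.
    rewrite -(ler_pM2l cE0) mulfV ?gt_eqF //; lra.
  have x2 : 0 <= xi ^+ 2 by apply: sqr_ge0.
  have f2 : xi ^+ 2 * sq (g0 n) <= xi ^+ 2 * cE^-1 by apply: ler_wpM2l.
  have f1 : kap * sq y <= kap * (2 * sq u + 2 * (xi ^+ 2 * cE^-1)).
    by apply: ler_wpM2l; [exact: ltW|lra].
  have f3 : (kap * 2) * sq u <= cE * sq u by apply: ler_wpM2r => //; apply: sq_ge0.
  have f4 : (kap * (1 + 2 / cE)) * xi ^+ 2 <= (c3 / 2) * xi ^+ 2 by apply: ler_wpM2r.
  have f5 : (c3 / 2) * xi ^+ 2 <= (1 - qform (Sig n) (g0 n)) * xi ^+ 2 by apply: ler_wpM2r.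
  have f6 := LB n h0 u.
  move: f1 f3 f4 f5 f6 Hqu; rewrite mulrDl mulrDr /=.
  set Q := qform (Sig n) y; set B := bil (Sig n) (g0 n) y.
  set G := qform (Sig n) (g0 n); set U := qform (Sig n) u.
  set sy := sq y; set su := sq u; set ci := cE^-1.
  move=> f1 f3 f4 f5 f6 Hqu.
  lra.
split; first split.
- apply: (proj2 (nearE _)); exists N0 => n Hn.
  rewrite diffE mulmxN -scalemxAr Sw //.
  apply: normoo_le => [|i]; first exact: ltW.
  rewrite !mxE normrN normrM gtr0_norm //.
  have := le_trans (normoo_ge (z n) i) (Hz n) => h.
  by rewrite -[X in _ <= X]mulr1; apply: ler_wpM2l => //; exact: ltW.
- exact: Heli.
split; first split.
- apply: (proj2 (nearE _)); exists Nall => n Hn; split.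
    move=> v vn0; apply: lt_le_trans (LBM n Hn v).
    apply: mulr_gt0 => //; rewrite lt_def sq_ge0 andbT.
    by apply/eqP => /sq_eq0 /eqP; apply/negP.
  apply: normoo_le => [|i]; first lra.
  have [h0 h2 h3 h5] := NallP n Hn.
  rewrite -bil_delta.
  have := bil_CS (delta_mx i 0) (g0 n) (Hsym n) (Hpsd n).
  have -> : qform (Sig n) (delta_mx i 0) = 1.
    by rewrite qformE bil_delta -colE mxE Hdiag.
  have := qg0 n Hn; rewrite mul1r => hq hb.
  set b := bil _ _ _ in hb *.
  rewrite ler_norml; apply/andP; split; nra.
- exists kap => //; apply: (proj2 (nearE _)); exists Nall => n Hn a0 /eigenvalueP [u uM un0].
  have := LBM n Hn u^T.
  have -> : qform (SigmaG (Sig n) (g0 n)) u^T = a0 * sq u^T.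
    by rewrite /qform trmxK uM -scalemxAl mxE /sq trmxK.
  have sp : 0 < sq u^T.
    rewrite lt_def sq_ge0 andbT; apply/eqP => /sq_eq0 /eqP.
    by rewrite trmx_eq0; apply/negP.
  by rewrite ler_pM2r.
split.
- move=> Hc.
  have [N6 HN6] := Hsmall (c2 / 2) (divr_gt0 c20 (ltr0Sn _ _)).
  have /cvgrPdist_lt Hc' := Hc.
  have := Hc' (c2 / 2) (divr_gt0 c20 (ltr0Sn _ _)).
  move=> /nearE [N7 HN7].
  set n := maxn N0 (maxn N2 (maxn N6 N7)).
  have h0 : (N0 <= n)%N by rewrite leq_maxl.
  have h2 : (N2 <= n)%N by rewrite /n !leq_max leqnn /= !orbT.
  have h6 : (N6 <= n)%N by rewrite /n !leq_max leqnn /= !orbT.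
  have h7 : (N7 <= n)%N by rewrite /n !leq_max leqnn /= !orbT.
  have l0 := Hlam n.
  have ha := age n h2.
  have e1 : a n = lam n ^+ 2 * dot (w n) (z n) by rewrite /a adot dotC.
  have hd := dot_le (w n) (Hz n).
  have hd' : dot (w n) (z n) <= norm1 (w n) by move: hd; rewrite ler_norml => /andP[].
  have f1 : lam n ^+ 2 * dot (w n) (z n) <= lam n ^+ 2 * norm1 (w n).
    by apply: ler_wpM2l => //; exact: sqr_ge0.
  have f2 : norm1 (lam n *: w n) <= norm1 (g0 n) + norm1 (gs n).
    by rewrite -diffE'; apply: le_trans (norm1D _ _) _; rewrite norm1N.
  have f3 : lam n * norm1 (lam n *: w n) = lam n ^+ 2 * norm1 (w n).
    by rewrite norm1Z gtr0_norm // expr2 mulrA.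
  have f4 := ler_wpM2l (ltW l0) f2.
  rewrite mulrDr in f4.
  have := HN6 n h6; have := HN7 n h7.
  rewrite sub0r normrN ger0_norm; last by rewrite mulr_ge0 ?norm1_ge0 // ltW.
  lra.
- exists c2 => //; apply: (proj2 (nearE _)); exists (maxn N0 N2) => n.
  rewrite geq_max => /andP[h0 h2] /=.
  by rewrite diffE' qformZ qw //; exact: (HN2 n h2).
Qed.
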